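(* Let $c$ be a positive integer and let $G=(V,E)$ be a graph on $n$ vertices such that at least $3n/4$ of its vertices have degree at least $4c$. Then $G$ has at most $5n/6$ $c$-edge-connected components.
   Context: Graphs are undirected and may have parallel edges but no self-loops. A graph is $c$-edge-connected if it has no cut of size $<c$; a single vertex is $c$-edge-connected. The $c$-edge-connected components are the maximal induced $c$-edge-connected subgraphs; their vertex sets partition $V$. *)

(* Defs.v *)
(* A finite multigraph (parallel edges allowed, no self-loops)
   on a finite vertex type V is given by a multiplicity function
   m : V -> V -> nat (m x y = number of edges between x and y), which is
   required to be symmetric with m x x = 0 (as hypotheses of the theorem). *)
From mathcomp Require Import all_boot.
Set Implicit Arguments. Unset Strict Implicit. Unset Printing Implicit Defensive.

Section Multigraph.
Variable V : finType.
Variable m : V -> V -> nat.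

Definition deg (v : V) : nat := \sum_(u : V) m v u.

Definition cut_in (A S : {set V}) : nat :=
  \sum_(x in S) \sum_(y in A :\: S) m x y.

(* G[A] is c-edge-connected: no cut of size < c, i.e. every split of A into
   a nonempty S and nonempty A \ S has at least c crossing edges.
   (A single vertex is c-edge-connected vacuously.) *)
Definition edge_conn (c : nat) (A : {set V}) : bool :=
  [forall S : {set V},
     [&& S \subset A, S != set0 & S != A] ==> (c <= cut_in A S)].

Definition ecc_components (c : nat) : {set {set V}} :=
  [set A : {set V} | [&& A != set0, edge_conn c A &
     [forall B : {set V}, ((A \subset B) && edge_conn c B) ==> (B == A)]]].

End Multigraph.

(* Main.v *)
Require Import Defs.
From mathcomp Require Import all_boot zify.
Set Implicit Arguments. Unset Strict Implicit. Unset Printing Implicit Defensive.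

Lemma sum_sub (T : finType) (A B : {set T}) (F : T -> nat) :
  A \subset B -> \sum_(i in A) F i <= \sum_(i in B) F i.
Proof. move=> sAB; rewrite [X in _ <= X](big_setID A) /= (setIidPr sAB); exact: leq_addr. Qed.

Lemma cut_mono (V : finType) (m : V -> V -> nat) (A U S : {set V}) :
  A \subset U -> cut_in m A (A :&: S) <= cut_in m U S.
Proof.
move=> sAU; rewrite /cut_in.
apply: leq_trans (sum_sub _ (subsetIr A S)).
apply: leq_sum => x _; apply: sum_sub.
apply/subsetP => y; rewrite !inE => /andP[H1 H2].
rewrite (subsetP sAU) // andbT; move: H1; by rewrite H2.
Qed.

Lemma cut_split (V : finType) (m : V -> V -> nat) c (A U S : {set V}) :
  edge_conn m c A -> A \subset U -> A :&: S != set0 -> ~~ (A \subset S) ->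
  c <= cut_in m U S.
Proof.
move=> /forallP /(_ (A :&: S)) /implyP H sAU n0 nsub.
apply: leq_trans (cut_mono m S sAU); apply: H.
rewrite subsetIl n0 /=; apply/eqP => E; move/negP: nsub; apply; exact/setIidPl.
Qed.

Lemma conn_union (V : finType) (m : V -> V -> nat) c (A B : {set V}) :
  edge_conn m c A -> edge_conn m c B -> A :&: B != set0 -> edge_conn m c (A :|: B).
Proof.
move=> cA cB /set0Pn [z]; rewrite inE => /andP[zA zB].
apply/forallP => S; apply/implyP => /and3P[sS nS0 nSU].
have [hA|hA] := boolP ((A :&: S != set0) && ~~ (A \subset S)).
  by case/andP: hA => h1 h2; apply: (cut_split cA (subsetUl A B)).
have [hB|hB] := boolP ((B :&: S != set0) && ~~ (B \subset S)).
  by case/andP: hB => h1 h2; apply: (cut_split cB (subsetUr A B)).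
exfalso; rewrite negb_and !negbK in hA; rewrite negb_and !negbK in hB.
case zS: (z \in S).
  have h1 : A :&: S != set0 by apply/set0Pn; exists z; rewrite inE zA zS.
  have h2 : B :&: S != set0 by apply/set0Pn; exists z; rewrite inE zB zS.
  rewrite (negbTE h1) /= in hA; rewrite (negbTE h2) /= in hB.
  move/negP: nSU; apply; rewrite eqEsubset sS /=; by rewrite subUset hA hB.
have h1 : A :&: S == set0.
  move: hA => /orP[//|/subsetP/(_ z zA)]; by rewrite zS.
have h2 : B :&: S == set0.
  move: hB => /orP[//|/subsetP/(_ z zB)]; by rewrite zS.
case/set0Pn: nS0 => y yS.
move: (subsetP sS y yS); rewrite inE => /orP[yA|yB].
  by move/eqP/setP/(_ y): h1; rewrite !inE yA yS.
by move/eqP/setP/(_ y): h2; rewrite !inE yB yS.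
Qed.

Lemma conn1 (V : finType) (m : V -> V -> nat) c (x : V) : edge_conn m c [set x].
Proof.
apply/forallP => S; apply/implyP => /and3P[sS nS0 nSx].
by rewrite subset1 in sS; case/orP: sS => /eqP E; [rewrite E eqxx in nSx|rewrite E eqxx in nS0].
Qed.

Lemma exists_comp (V : finType) (m : V -> V -> nat) c (x : V) :
  exists A, (A \in ecc_components m c) && (x \in A).
Proof.
pose P := fun B : {set V} => (x \in B) && edge_conn m c B.
have P1 : P [set x] by rewrite /P set11 conn1.
case: (@arg_maxnP _ _ P (fun B : {set V} => #|B|) P1) => B PB maxB.
exists B; case/andP: PB => xB cB; rewrite xB andbT inE; apply/and3P; split => //.
  by apply/set0Pn; exists x.
apply/forallP => B'; apply/implyP => /andP[sB cB'].
have : #|B'| <= #|B| by apply: maxB; rewrite /P (subsetP sB) //.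
by move=> le; rewrite eq_sym eqEcard sB le.
Qed.

Lemma ecc_unique (V : finType) (m : V -> V -> nat) c (A B : {set V}) x :
  A \in ecc_components m c -> B \in ecc_components m c -> x \in A -> x \in B -> A = B.
Proof.
rewrite !inE => /and3P[_ cA /forallP mA] /and3P[_ cB /forallP mB] xA xB.
have cU : edge_conn m c (A :|: B).
  by apply: conn_union => //; apply/set0Pn; exists x; rewrite inE xA xB.
move: (mA (A :|: B)) (mB (A :|: B)); rewrite subsetUl subsetUr cU /= => /eqP E1 /eqP E2.
exact: (etrans (esym E1) E2).
Qed.

Definition comp (V : finType) (m : V -> V -> nat) c (x : V) : {set V} :=
  odflt set0 [pick A in ecc_components m c | x \in A].

Lemma comp_spec (V : finType) (m : V -> V -> nat) c (x : V) :
  (comp m c x \in ecc_components m c) && (x \in comp m c x).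
Proof.
rewrite /comp; case: pickP => [A /andP[h1 h2]|H] /=; first by rewrite h1 h2.
by case: (exists_comp m c x) => A HA; move: (H A); rewrite HA.
Qed.

Lemma comp_eq (V : finType) (m : V -> V -> nat) c (x : V) A :
  A \in ecc_components m c -> x \in A -> comp m c x = A.
Proof.
move=> HA xA; case/andP: (comp_spec m c x) => h1 h2.
exact: (ecc_unique h1 HA h2 xA).
Qed.

Lemma comp_same (V : finType) (m : V -> V -> nat) c (x y : V) :
  y \in comp m c x -> comp m c y = comp m c x.
Proof. by move=> yx; apply: comp_eq => //; case/andP: (comp_spec m c x). Qed.

Definition e2 (V : finType) (m : V -> V -> nat) c (U : {set V}) : nat :=
  \sum_(x in U) \sum_(y in U | comp m c x != comp m c y) m x y.

Definition closedc (V : finType) (m : V -> V -> nat) c (U : {set V}) : Prop :=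
  forall x, x \in U -> comp m c x \subset U.

Lemma comp_conn (V : finType) (m : V -> V -> nat) c x : edge_conn m c (comp m c x).
Proof. by case/andP: (comp_spec m c x); rewrite inE => /and3P[]. Qed.

Lemma comp_self (V : finType) (m : V -> V -> nat) c x : x \in comp m c x.
Proof. by case/andP: (comp_spec m c x). Qed.

Lemma e2_split (V : finType) (m : V -> V -> nat) c (U S : {set V}) :
  (forall x y, m x y = m y x) ->
  S \subset U -> closedc m c S -> closedc m c (U :\: S) ->
  e2 m c U = e2 m c S + e2 m c (U :\: S) + 2 * cut_in m U S.
Proof.
move=> sym sS clS clT.
have E1 : forall x, x \in S ->
   \sum_(y in U | comp m c x != comp m c y) m x y =
   \sum_(y in S | comp m c x != comp m c y) m x y + \sum_(y in U :\: S) m x y.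
  move=> x xS; rewrite (big_setIDcond _ U S) /= (setIidPr sS); congr (_ + _).
  apply: eq_bigl => y; case yT: (y \in U :\: S) => //=.
  apply/eqP => E; move: yT; rewrite inE (subsetP (clS x xS) y) //.
  by rewrite E comp_self.
have E2 : forall x, x \in U :\: S ->
   \sum_(y in U | comp m c x != comp m c y) m x y =
   \sum_(y in S) m x y + \sum_(y in U :\: S | comp m c x != comp m c y) m x y.
  move=> x xT; rewrite (big_setIDcond _ U S) /= (setIidPr sS); congr (_ + _).
  apply: eq_bigl => y; case yS: (y \in S) => //=.
  apply/eqP => E; move: xT; rewrite inE (subsetP (clS y yS) x) //.
  by rewrite -E comp_self.
rewrite /e2 (big_setID S) /= (setIidPr sS) (eq_bigr _ E1) (eq_bigr _ E2) !big_split /=.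
have X : \sum_(i in U :\: S) \sum_(y in S) m i y = cut_in m U S.
  rewrite /cut_in exchange_big /=; apply: eq_bigr => x _; apply: eq_bigr => y _; exact: sym.
rewrite X /cut_in; lia.
Qed.

Lemma e2_bound (V : finType) (m : V -> V -> nat) c :
  (forall x y, m x y = m y x) ->
  forall n (U : {set V}), #|U| <= n -> U != set0 -> closedc m c U ->
  e2 m c U + 2 * c <= 2 * c * #|comp m c @: U|.
Proof.
move=> sym; elim=> [|n IH] U hU n0 cl.
  by move: hU; rewrite leqn0 cards_eq0 (negbTE n0).
case: (boolP (edge_conn m c U)) => [cU|ncU].
  case/set0Pn: n0 => x xU.
  have EU : U = comp m c x.
    case/andP: (comp_spec m c x); rewrite inE => /and3P[_ _ /forallP /(_ U)].
    by rewrite (cl x xU) cU /= => /eqP.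
  have -> : e2 m c U = 0.
    apply: big1 => y yU; apply: big1 => z /andP[zU].
    rewrite EU in yU zU.
    by rewrite (comp_same yU) (comp_same zU) eqxx.
  rewrite add0n; apply: leq_pmulr; rewrite card_gt0; apply/set0Pn.
  by exists (comp m c x); apply: imset_f.
move/forallPn: ncU => [S]; rewrite negb_imply -ltnNge => /andP[/and3P[sS nS0 nSU] ltc].
have clS : closedc m c S.
  move=> x xS; case: (boolP (comp m c x \subset S)) => // ns; exfalso.
  have := cut_split (comp_conn m c x) (cl x (subsetP sS x xS)) _ ns.
  have -> : comp m c x :&: S != set0 by apply/set0Pn; exists x; rewrite inE comp_self xS.
  by move=> /(_ isT); rewrite leqNgt ltc.
have clT : closedc m c (U :\: S).
  move=> x; rewrite inE => /andP[xnS xU]; apply/subsetP => y yc.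
  rewrite inE (subsetP (cl x xU)) // andbT; apply/negP => yS.
  move: (subsetP (clS y yS) x); rewrite (comp_same yc) comp_self => /(_ isT).
  by rewrite (negbTE xnS).
have nT0 : U :\: S != set0.
  rewrite setD_eq0; apply/negP => sUS; move/negP: nSU; apply.
  by rewrite eqEsubset sS sUS.
have cardE := cardsID S U; rewrite (setIidPr sS) in cardE.
have pS : 0 < #|S| by rewrite card_gt0.
have pT : 0 < #|U :\: S| by rewrite card_gt0.
have IHS := IH S ltac:(lia) nS0 clS.
have IHT := IH (U :\: S) ltac:(lia) nT0 clT.
have EI : comp m c @: U = comp m c @: S :|: comp m c @: (U :\: S).
  by rewrite -imsetU -{1}(setID U S) (setIidPr sS).
have D : comp m c @: S :&: comp m c @: (U :\: S) = set0.
  apply/setP => A; rewrite !inE; apply/negbTE/andP => [[/imsetP[x xS ->] /imsetP[y yT E]]].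
  move: yT; rewrite inE (subsetP (clS x xS) y) // E comp_self //.
have cardI := cardsUI (comp m c @: S) (comp m c @: (U :\: S)).
rewrite D cards0 addn0 -EI in cardI.
rewrite (e2_split sym sS clS clT) cardI.
nia.
Qed.

Theorem lemma2 (V : finType) (m : V -> V -> nat) (c : nat) :
  (forall x y : V, m x y = m y x) ->
  (forall x : V, m x x = 0) ->
  0 < c ->
  3 * #|V| <= 4 * #|[set v : V | 4 * c <= deg m v]| ->
  6 * #|ecc_components m c| <= 5 * #|V|.
Proof.
move=> sym loop cpos hD.
set K := comp m c @: [set: V].
set D := [set v : V | 4 * c <= deg m v].
set Y := [set v : V | comp m c v == [set v]].
set X := Y :&: D.
have hecc : #|ecc_components m c| <= #|K|.
  apply: subset_leq_card; apply/subsetP => A HA.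
  have := HA; rewrite inE => /and3P[/set0Pn[x xA] _ _].
  by rewrite -(comp_eq HA xA); apply: imset_f; rewrite inE.
have he2 : e2 m c [set: V] <= 2 * c * #|K|.
  case: (boolP ([set: V] == set0)) => [/eqP E|n0].
    by rewrite /e2 E big_set0.
  have := @e2_bound V m c sym _ _ (leqnn _) n0 (fun x _ => subsetT _); rewrite -/K => h; apply: leq_trans h; exact: leq_addr.
have hX : \sum_(v in X) deg m v <= e2 m c [set: V].
  rewrite /e2; apply: leq_trans (sum_sub _ (subsetT X)).
  apply: leq_sum => v; rewrite !inE => /andP[/eqP Ev _].
  rewrite /deg (bigID (fun y => comp m c v != comp m c y)) /=.
  rewrite [X in _ + X]big1 ?addn0.
    by apply: eq_leq; apply: eq_bigl => y; rewrite in_setT.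
  move=> y; rewrite negbK => /eqP E.
  have : y \in comp m c v by rewrite E comp_self.
  by rewrite Ev inE => /eqP ->.
have h4X : #|X| * (4 * c) <= \sum_(v in X) deg m v.
  rewrite -sum_nat_const; apply: leq_sum => v; rewrite !inE => /andP[_ //].
have h2X : 2 * #|X| <= #|K|.
  have : (2 * c) * (2 * #|X|) <= (2 * c) * #|K| by lia.
  by rewrite leq_pmul2l // muln_gt0 cpos.
have hpart : partition K [set: V].
  apply/and3P; split.
  - apply/eqP/setP => x; rewrite in_setT; apply/bigcupP.
    by exists (comp m c x); [apply: imset_f; rewrite inE | exact: comp_self].
  - apply/trivIsetP => A B /imsetP[x _ ->] /imsetP[y _ ->] ne.
    rewrite -setI_eq0; apply/eqP/setP => z; rewrite !inE; apply/negbTE/andP => [[z1 z2]].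
    by move/eqP: ne; apply; rewrite -(comp_same z1) -(comp_same z2).
  - apply/imsetP => [[x _ E]]; by move: (comp_self m c x); rewrite -E inE.
have hn := card_partition hpart; rewrite cardsT in hn.
set B1 := [set A : {set V} | #|A| == 1].
have hsplit : #|K :&: B1| + 2 * #|K :\: B1| <= #|V|.
  rewrite hn (big_setID B1) /=; apply: leq_add.
    by rewrite -sum1_card; apply: eq_leq; apply: eq_bigr => A; rewrite !inE => /andP[_ /eqP ->].
  rewrite mulnC -sum_nat_const; apply: leq_sum => A; rewrite !inE => /andP[n1 /imsetP[x _ E]]; rewrite E in n1 *.
  have : 0 < #|comp m c x| by rewrite card_gt0; apply/set0Pn; exists x; exact: comp_self.
  move: n1; lia.
have hK := cardsID B1 K.
have hK1 : #|K :&: B1| <= #|Y|.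
  apply: leq_trans (_ : #|[set [set v] | v in Y]| <= _); last by rewrite card_imset //; exact: set1_inj.
  apply: subset_leq_card; apply/subsetP => A; rewrite !inE => /andP[/imsetP[x _ ->] /cards1P[y Ey]].
  have yc : y \in comp m c x by rewrite Ey set11.
  apply/imsetP; exists y => //; rewrite inE (comp_same yc) Ey //.
have hY : #|Y| <= #|X| + #|~: D|.
  apply: leq_trans (_ : #|X :|: ~: D| <= _).
    apply: subset_leq_card; apply/subsetP => v vY; rewrite !inE.
    by rewrite inE in vY; rewrite vY /=; case: (4 * c <= deg m v).
  by rewrite cardsU leq_subr.
have hCD : #|~: D| = #|V| - #|D| by rewrite cardsCs setCK.
have hDn : #|D| <= #|V| by apply: max_card.
rewrite -/D in hD; clear -hD hecc h2X hsplit hK hK1 hY hCD hDn; lia.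
Qed.
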